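(* Let $\mathbf B$ be a partial residuated Boolean algebra and let $a,b\in B$ with $a\not\leq b$. Then there exists a prime filter $F$ of $\mathbf B$ such that $a\in F$ and $b\notin F$.
   Context: A residuated Boolean algebra is a Boolean algebra $(A,\vee,\wedge,\neg,\top,\bot,\leq)$ with a binary operation $\otimes$ having unit $1$ and operations $\backslash,/$ with $a\otimes b\leq c$ iff $b\leq a\backslash c$ iff $a\leq c/b$. A partial structure $\mathbf B=(B,\otimes,\backslash,/,\vee,\wedge,\neg,1,\top,\bot,\leq)$ has partial operations on $B$ (write $x\star y=\infty$ if undefined), constants in $B$ and a relation $\leq$. An embedding into a total residuated Boolean algebra is an injection preserving constants, commuting with operations wherever defined, and satisfying $x\leq y\iff\iota(x)\leq\iota(y)$. $\mathbf B$ is a partial residuated Boolean algebra if it embeds into some residuated Boolean algebra and for every $a\in B$, $\neg a$ is defined, $a\vee\neg a=\top$ and $a\wedge\neg a=\bot$. A prime filter of $\mathbf B$ is $F\subseteq B$, $F\neq B$, such that: $a\in F$, $a\leq b$ imply $b\in F$; $a,b\in F$ and $a\wedge b\neq\infty$ imply $a\wedge b\in F$; and $\neg a\in F$ iff $a\notin F$ for all $a\in B$. *)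

(* Defs.v *)
(* Boolean algebras are MathComp's complemented distributive
   lattices with top and bottom (ctbDistrLatticeType). *)
From HB Require Import structures.
From mathcomp Require Import all_boot all_order.
Set Warnings "-notation-overridden".
Import Order.Theory.
Set Implicit Arguments. Unset Strict Implicit. Unset Printing Implicit Defensive.
Local Open Scope order_scope.

Record rba_ops (d : Order.disp_t) (T : ctbDistrLatticeType d) := RbaOps {
  otimes : T -> T -> T;
  ldiv : T -> T -> T;   (* a \ c *)
  rdiv : T -> T -> T;   (* c / b *)
  one : T
}.

Definition is_rba (d : Order.disp_t) (T : ctbDistrLatticeType d) (o : rba_ops T) : Prop :=
  (forall x : T, otimes o (one o) x = x /\ otimes o x (one o) = x) /\
  (forall a b c : T,
     (otimes o a b <= c <-> b <= ldiv o a c) /\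
     (b <= ldiv o a c <-> a <= rdiv o c b)).

(** Partial structures (B, ⊗, \, /, ∨, ∧, ¬, 1, ⊤, ⊥, ≤):
    partial operations are option-valued ([None] = undefined = ∞). *)
Record pstruct := PStruct {
  pcar : Type;
  potimes : pcar -> pcar -> option pcar;
  pldiv : pcar -> pcar -> option pcar;
  prdiv : pcar -> pcar -> option pcar;
  pjoin : pcar -> pcar -> option pcar;
  pmeet : pcar -> pcar -> option pcar;
  pneg : pcar -> option pcar;
  pone : pcar;
  ptop : pcar;
  pbot : pcar;
  ple : pcar -> pcar -> Prop
}.
Arguments potimes : clear implicits.
Arguments pldiv : clear implicits.
Arguments prdiv : clear implicits.
Arguments pjoin : clear implicits.
Arguments pmeet : clear implicits.
Arguments pneg : clear implicits.
Arguments pone : clear implicits.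
Arguments ptop : clear implicits.
Arguments pbot : clear implicits.
Arguments ple : clear implicits.

Definition embedding (B : pstruct) (d : Order.disp_t) (T : ctbDistrLatticeType d)
    (o : rba_ops T) (i : pcar B -> T) : Prop :=
  injective i /\
  i (pone B) = one o /\ i (ptop B) = \top /\ i (pbot B) = \bot /\
  (forall x y z, potimes B x y = Some z -> i z = otimes o (i x) (i y)) /\
  (forall x y z, pldiv B x y = Some z -> i z = ldiv o (i x) (i y)) /\
  (forall x y z, prdiv B x y = Some z -> i z = rdiv o (i x) (i y)) /\
  (forall x y z, pjoin B x y = Some z -> i z = i x `|` i y) /\
  (forall x y z, pmeet B x y = Some z -> i z = i x `&` i y) /\
  (forall x z, pneg B x = Some z -> i z = ~` i x) /\
  (forall x y, ple B x y <-> i x <= i y).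

Definition partial_rba (B : pstruct) : Prop :=
  (exists (d : Order.disp_t) (T : ctbDistrLatticeType d) (o : rba_ops T)
          (i : pcar B -> T), is_rba o /\ embedding o i) /\
  (forall a : pcar B, exists na,
     pneg B a = Some na /\ pjoin B a na = Some (ptop B) /\
     pmeet B a na = Some (pbot B)).

Definition prime_filter (B : pstruct) (F : pcar B -> Prop) : Prop :=
  (exists x, ~ F x) /\
  (forall a b, F a -> ple B a b -> F b) /\
  (forall a b c, F a -> F b -> pmeet B a b = Some c -> F c) /\
  (forall a na, pneg B a = Some na -> (F na <-> ~ F a)).
Arguments prime_filter : clear implicits.

(* Main.v *)
Require Import Defs.
From mathcomp Require Import all_boot all_order.
From mathcomp Require Import boolp classical_sets.
Import Order.Theory.
Open Scope order_scope.

Section U.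
Variables (d : Order.disp_t) (T : ctbDistrLatticeType d).

Definition PF (Y : T -> Prop) :=
  (forall x y, Y x -> x <= y -> Y y) /\ (forall x y, Y x -> Y y -> Y (x `&` y)) /\ ~ Y \bot.

Lemma le_compl (m x : T) : m `&` x <= \bot -> m <= ~` x.
Proof.
move=> h; have e : m `&` x = \bot by apply/le_anti; rewrite h le0x.
have -> : m = m `&` ~` x.
  by rewrite -{1}(meetx1 m) -(joinxC x) meetUr e join0x.
exact: leIr.
Qed.

Lemma ultra (c : T) : ~ c <= \bot ->
  exists M : T -> Prop, M c /\ PF M /\ forall x, M x \/ M (~` x).
Proof.
move=> hc.
pose up : T -> Prop := fun x => c <= x.
pose P : set (set T) := fun X => PF (fun x => X x \/ up x).
have [A [PA Amax]] : exists A, P A /\ forall B, (A `<` B)%classic -> ~ P B.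
  apply: Zorn_bigcup => F FP Ftot.
  have key : forall x y, ((\bigcup_(X in F) X)%classic x \/ up x) ->
      ((\bigcup_(X in F) X)%classic y \/ up y) ->
      (up x /\ up y) \/ exists Z, F Z /\ (Z x \/ up x) /\ (Z y \/ up y).
    move=> x y [[X FX Xx]|ux] [[Y FY Yy]|uy].
    - right; case: (Ftot X Y FX FY) => sub.
      + by exists Y; split=> //; split; left=> //; apply: sub.
      + by exists X; split=> //; split; left=> //; apply: sub.
    - by right; exists X; split=> //; split; [left|right].
    - by right; exists Y; split=> //; split; [right|left].
    - by left.
  split; [|split].
  - move=> x y hx lxy; case: (key x x hx hx) => [[ux _]|[Z [FZ [hZ _]]]].
      by right; apply: le_trans lxy.
    have [up1 _] := FP Z FZ; case: (up1 x y hZ lxy) => [Zy|uy]; last by right.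
    by left; exists Z.
  - move=> x y hx hy; case: (key x y hx hy) => [[ux uy]|[Z [FZ [hZx hZy]]]].
      by right; rewrite /up lexI ux uy.
    have [_ [m1 _]] := FP Z FZ; case: (m1 x y hZx hZy) => [Zy|uy]; last by right.
    by left; exists Z.
  - move=> hb; case: (key _ _ hb hb) => [[ub _]|[Z [FZ [hZ _]]]] //.
    by have [_ [_ nb]] := FP Z FZ.
pose M := fun x => A x \/ up x.
have [Mup [Mmeet Mbot]] : PF M := PA.
have Mmax : forall G, PF G -> G c -> (forall x, M x -> G x) -> forall x, G x -> M x.
  move=> G PG Gc MG x Gx; apply: contrapT => nMx.
  apply: (Amax G).
    split; first by move=> y Ay; apply: MG; left.
    by move=> GA; apply: nMx; left; apply: GA.
  have e : (fun y => G y \/ up y) = G.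
    apply: funext => y; apply: propext; split; last by left.
    by case=> // uy; case: PG => [h _]; apply: h uy.
  by rewrite /P e.
exists M; split; first by right; rewrite /up.
split; first by [].
move=> x; case: (pselect (M x)) => Mx; first by left.
right.
pose G := fun y => exists m, M m /\ m `&` x <= y.
case: (pselect (G \bot)) => [[m [Mm hm]]|nGb].
  by apply: Mup Mm _; apply: le_compl.
exfalso; apply: Mx; apply: (Mmax G) => //.
- split; [|split] => //.
  + by move=> y z [m [Mm h]] yz; exists m; split=> //; apply: le_trans yz.
  + move=> y z [m [Mm h]] [n [Mn h']]; exists (m `&` n); split; first exact: Mmeet.
    rewrite lexI; apply/andP; split.
      by apply: le_trans h; rewrite leI2 // leIl.
    by apply: le_trans h'; rewrite leI2 // leIr.
- by exists c; split; [right; rewrite /up|apply: leIl].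
- by move=> y My; exists y; split=> //; apply: leIl.
- by exists c; split; [right; rewrite /up|apply: leIr].
Qed.
End U.

Theorem lemma21 (B : pstruct) (HB : partial_rba B) (a b : pcar B)
  (hab : ~ ple B a b) :
  exists F : pcar B -> Prop, prime_filter B F /\ F a /\ ~ F b.
Proof.
case: HB => [[d [T [o [i [_ emb]]]]] _].
case: emb => [_ [_ [_ [_ [_ [_ [_ [_ [Hmeet [Hneg Hle]]]]]]]]]].
pose c := i a `&` ~` i b.
have hc : ~ c <= \bot.
  move=> h; apply: hab; apply/Hle.
  by rewrite -(complK (i b)); apply: le_compl.
have [M [Mc [[Mup [Mmeet Mbot]] Mult]]] := @ultra d T c hc.
have Mnb : ~ M (i b).
  move=> Mb; apply: Mbot; have := Mmeet _ _ Mc Mb.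
  by rewrite /c -meetA (meetC (~` _)) meetxC meetx0.
have Mneg : forall x, M (~` x) <-> ~ M x.
  move=> x; split.
    by move=> Mn Mx; apply: Mbot; have := Mmeet _ _ Mx Mn; rewrite meetxC.
  by move=> nM; case: (Mult x).
exists (fun x => M (i x)); split; last first.
  by split=> //; apply: Mup Mc _; apply: leIl.
split; first by exists b.
split; first by move=> x y Mx /Hle; apply: Mup.
split; first by move=> x y z Mx My /Hmeet ->; apply: Mmeet.
by move=> x nx /Hneg ->; apply: Mneg.
Qed.
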